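(* Let $\mathbf L=(L,\vee,\wedge)$ be a partial lattice and $a,b,c,d\in L$. Then: (i) $\mathbf L^*=(L^*,\leq^* )$ is a lattice with lattice operations $x\vee^*y:=\sup_{\leq^*}(x,y)$ and $x\wedge^*y:=\inf_{\leq^*}(x,y)$ for $x,y\in L^*$; (ii) $a\vee b$ is defined in $\mathbf L$ and equals $c$ iff $a\vee^*b=c$; and $a\wedge b$ is defined in $\mathbf L$ and equals $d$ iff $a\wedge^*b=d$; (iii) $a\vee^*b=a\vee b$ if $U(a,b)\neq\emptyset$ and $a\vee^*b=1$ otherwise; $a\wedge^*b=a\wedge b$ if $L(a,b)\neq\emptyset$ and $a\wedge^*b=0$ otherwise.
   Context: A partial lattice is a set $L$ with two partial binary operations $\vee,\wedge$ satisfying strong idempotency, commutativity and associativity (for every assignment, one side is defined iff the other is, and then they are equal) and the duality conditions: if $a\vee b$ is defined and equals $a$ then $a\wedge b$ is defined and equals $b$, and dually. Its induced order is $x\leq y$ iff $x\vee y$ is defined and equals $y$ (iff $x\wedge y$ is defined and equals $x$). $U(a,b)$ and $L(a,b)$ denote the sets of common upper, resp. lower, bounds of $a,b$ in $(L,\leq)$. The two-point extension $\mathbf L^*=(L^*,\leq^* )$ of $\mathbf L$, with new elements $0,1\notin L$: $L^*=L$ if $\vee$ and $\wedge$ are both everywhere defined; $L^*=L\cup\{1\}$ if $\wedge$ is everywhere defined but $\vee$ is not; $L^*=L\cup\{0\}$ if $\vee$ is everywhere defined but $\wedge$ is not; $L^*=L\cup\{0,1\}$ if neither is everywhere defined. The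 order $\leq^*$ on $L^*$ is $\leq$ together with $0\leq^* x$ and $x\leq^* 1$ for all $x\in L^*$ (whenever $0$, resp. $1$, belongs to $L^*$). *)

(* Defs.v *)
From Stdlib Require Import ClassicalEpsilon.

Set Implicit Arguments.

Definition pop (T : Type) := T -> T -> option T.

Definition obind {A B : Type} (f : A -> option B) (o : option A) : option B :=
  match o with Some a => f a | None => None end.

(* Strong idempotency, commutativity, associativity: both sides are
   options, equal as options means "one defined iff the other, then equal". *)
Definition strong_idem T (op : pop T) := forall a, op a a = Some a.
Definition strong_comm T (op : pop T) := forall a b, op a b = op b a.
Definition strong_assoc T (op : pop T) :=
  forall a b c, obind (fun x => op x c) (op a b) = obind (fun y => op a y) (op b c).

Record partial_lattice (T : Type) (join meet : pop T) : Prop := {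
  pl_join_idem : strong_idem join;
  pl_meet_idem : strong_idem meet;
  pl_join_comm : strong_comm join;
  pl_meet_comm : strong_comm meet;
  pl_join_assoc : strong_assoc join;
  pl_meet_assoc : strong_assoc meet;
  pl_dual_join : forall a b, join a b = Some a -> meet a b = Some b;
  pl_dual_meet : forall a b, meet a b = Some a -> join a b = Some b
}.

Definition ple T (join : pop T) (x y : T) : Prop := join x y = Some y.

Definition Ub T (join : pop T) (a b : T) : T -> Prop :=
  fun u => ple join a u /\ ple join b u.
Definition Lb T (join : pop T) (a b : T) : T -> Prop :=
  fun l => ple join l a /\ ple join l b.

Definition total_op T (op : pop T) := forall x y, exists z, op x y = Some z.

Inductive ext (T : Type) : Type := Bot | Top | Elt (t : T).
Arguments Bot {T}. Arguments Top {T}.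

Definition inS T (join meet : pop T) (x : ext T) : Prop :=
  match x with
  | Elt _ => True
  | Top => ~ total_op join
  | Bot => ~ total_op meet
  end.

(* the order <=^* (on ext T; only meaningful on elements of L^* ) *)
Definition leS T (join : pop T) (x y : ext T) : Prop :=
  match x, y with
  | Bot, _ => True
  | _, Top => True
  | Elt a, Elt b => ple join a b
  | _, _ => False
  end.

Definition is_supS T (join meet : pop T) (x y s : ext T) : Prop :=
  inS join meet s /\ leS join x s /\ leS join y s /\
  forall z, inS join meet z -> leS join x z -> leS join y z -> leS join s z.

Definition is_infS T (join meet : pop T) (x y s : ext T) : Prop :=
  inS join meet s /\ leS join s x /\ leS join s y /\
  forall z, inS join meet z -> leS join z x -> leS join z y -> leS join z s.

Definition is_lattice_S T (join meet : pop T) : Prop :=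
  (forall x, inS join meet x -> leS join x x) /\
  (forall x y, inS join meet x -> inS join meet y ->
     leS join x y -> leS join y x -> x = y) /\
  (forall x y z, inS join meet x -> inS join meet y -> inS join meet z ->
     leS join x y -> leS join y z -> leS join x z) /\
  (forall x y, inS join meet x -> inS join meet y ->
     exists s, is_supS join meet x y s) /\
  (forall x y, inS join meet x -> inS join meet y ->
     exists i, is_infS join meet x y i).

(* x \/^* y := sup_{<=^*}(x,y), x /\^* y := inf_{<=^*}(x,y), chosen by
   Hilbert's epsilon (they are unique whenever they exist). *)
Definition joinS T (join meet : pop T) (x y : ext T) : ext T :=
  epsilon (inhabits Bot) (fun s => is_supS join meet x y s).
Definition meetS T (join meet : pop T) (x y : ext T) : ext T :=
  epsilon (inhabits Bot) (fun s => is_infS join meet x y s).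

(* Main.v *)
Require Import Defs.
From Stdlib Require Import ClassicalEpsilon.

Lemma g_ub_l T (op:pop T) (Hi: strong_idem op) (Ha: strong_assoc op) a b c :
  op a b = Some c -> op a c = Some c.
Proof. intros H. pose proof (Ha a a b) as E. rewrite (Hi a) in E. simpl in E.
  rewrite H in E. simpl in E. congruence. Qed.

Lemma g_ub_r T (op:pop T) (Hi: strong_idem op) (Hc: strong_comm op) (Ha: strong_assoc op) a b c :
  op a b = Some c -> op b c = Some c.
Proof. intros H. rewrite Hc in H. eapply g_ub_l; eauto. Qed.

Lemma g_least T (op:pop T) (Ha: strong_assoc op) a b c u :
  op a b = Some c -> op a u = Some u -> op b u = Some u -> op c u = Some u.
Proof. intros H1 H2 H3. pose proof (Ha a b u) as E. rewrite H1, H3 in E. simpl in E.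
  congruence. Qed.

Lemma g_def T (op:pop T) (Ha: strong_assoc op) a b u :
  op a u = Some u -> op b u = Some u -> exists c, op a b = Some c.
Proof. intros H1 H2. pose proof (Ha a b u) as E. rewrite H2 in E. simpl in E.
  rewrite H1 in E. destruct (op a b); [eauto | simpl in E; discriminate]. Qed.

Lemma g_trans T (op:pop T) (Ha: strong_assoc op) x y z :
  op x y = Some y -> op y z = Some z -> op x z = Some z.
Proof. intros H1 H2. pose proof (Ha x y z) as E. rewrite H1 in E. simpl in E.
  rewrite H2 in E. simpl in E. congruence. Qed.

Arguments g_def {T op}.
Section S.
Context (T : Type) (join meet : pop T) (HL : partial_lattice join meet).

Lemma ple_meet x y : ple join x y <-> meet y x = Some x.
Proof. unfold ple. split; intro H.
  - apply (pl_dual_join HL). rewrite (pl_join_comm HL). exact H.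
  - apply (pl_dual_meet HL). rewrite (pl_meet_comm HL). exact H. Qed.

Lemma le_refl x : leS join x x.
Proof. destruct x; simpl; auto. apply (pl_join_idem HL). Qed.

Lemma le_antisym x y : leS join x y -> leS join y x -> x = y.
Proof. destruct x, y; simpl; try tauto. unfold ple. intros H1 H2.
  rewrite (pl_join_comm HL) in H1. congruence. Qed.

Lemma le_trans x y z : leS join x y -> leS join y z -> leS join x z.
Proof. destruct x, y, z; simpl; try tauto. unfold ple.
  intros; eapply g_trans; eauto. apply (pl_join_assoc HL). Qed.

Lemma sup_elt a b c : join a b = Some c -> is_supS join meet (Elt a) (Elt b) (Elt c).
Proof. intro H. repeat split; simpl; unfold ple.
  - eapply g_ub_l; eauto. apply HL. apply HL.
  - eapply g_ub_r; eauto; apply HL.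
  - intros z _ H1 H2. destruct z; simpl in *; try tauto.
    eapply g_least; eauto. apply HL. Qed.

Lemma sup_top a b : join a b = None -> is_supS join meet (Elt a) (Elt b) Top.
Proof. intro H. repeat split; simpl.
  - intro Ht. destruct (Ht a b). congruence.
  - intros z _ H1 H2. destruct z; simpl in *; try tauto.
    destruct (g_def (pl_join_assoc HL) _ _ _ H1 H2). congruence. Qed.

Lemma inf_elt a b d : meet a b = Some d -> is_infS join meet (Elt a) (Elt b) (Elt d).
Proof. intro H. repeat split; simpl; try rewrite ple_meet.
  - eapply g_ub_l; eauto. apply HL. apply HL.
  - eapply g_ub_r; eauto; apply HL.
  - intros z _ H1 H2. destruct z; simpl in *; try tauto.
    rewrite ple_meet in *. eapply g_least; eauto. apply HL. Qed.

Lemma inf_bot a b : meet a b = None -> is_infS join meet (Elt a) (Elt b) Bot.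
Proof. intro H. repeat split; simpl.
  - intro Ht. destruct (Ht a b). congruence.
  - intros z _ H1 H2. destruct z; simpl in *; try tauto.
    rewrite ple_meet in *.
    destruct (g_def (pl_meet_assoc HL) _ _ _ H1 H2). congruence. Qed.

Lemma sup_ex x y : inS join meet x -> inS join meet y -> exists s, is_supS join meet x y s.
Proof. intros Hx Hy.
  destruct x as [| |a].
  - exists y. repeat split; simpl; auto; intros; auto; try apply le_refl; try apply (pl_join_idem HL).
  - exists Top. repeat split; simpl; auto; try (destruct y; simpl; auto); intros; auto.
  - destruct y as [| |b].
    + exists (Elt a). repeat split; simpl; auto; intros; auto; try apply le_refl; try apply (pl_join_idem HL).
    + exists Top. repeat split; simpl; auto; intros; auto.
    + destruct (join a b) eqn:E.
      * eexists; apply sup_elt; eauto.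
      * eexists; apply sup_top; eauto. Qed.

Goal True. idtac. Abort.
Lemma inf_ex x y : inS join meet x -> inS join meet y -> exists s, is_infS join meet x y s.
Proof. intros Hx Hy.
  destruct x as [| |a].
  - exists Bot. repeat split; simpl; auto; intros; auto.
  - exists y. repeat split; simpl; auto; intros; auto; try apply le_refl; try apply (pl_join_idem HL). destruct y; simpl; auto.
  - destruct y as [| |b].
    + exists Bot. repeat split; simpl; auto; intros; auto.
    + exists (Elt a). repeat split; simpl; auto; intros; auto; try apply le_refl; try apply (pl_join_idem HL).
    + destruct (meet a b) eqn:E.
      * eexists; apply inf_elt; eauto.
      * eexists; apply inf_bot; eauto. Qed.

Lemma joinS_eq x y s : is_supS join meet x y s -> joinS join meet x y = s.
Proof. intro H. unfold joinS.
  pose proof (epsilon_spec (inhabits Bot) (fun s => is_supS join meet x y s) (ex_intro _ s H)) as H'.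
  set (e := epsilon _ _) in *.
  destruct H as [A [B [C D]]]. destruct H' as [A' [B' [C' D']]].
  apply le_antisym; auto. Qed.

Lemma meetS_eq x y s : is_infS join meet x y s -> meetS join meet x y = s.
Proof. intro H. unfold meetS.
  pose proof (epsilon_spec (inhabits Bot) (fun s => is_infS join meet x y s) (ex_intro _ s H)) as H'.
  set (e := epsilon _ _) in *.
  destruct H as [A [B [C D]]]. destruct H' as [A' [B' [C' D']]].
  apply le_antisym; auto. Qed.

End S.
Arguments ple_meet {T join meet}. Arguments le_refl {T join meet}. Arguments le_antisym {T join meet}. Arguments le_trans {T join meet}. Arguments sup_elt {T join meet}. Arguments sup_top {T join meet}. Arguments inf_elt {T join meet}. Arguments inf_bot {T join meet}. Arguments sup_ex {T join meet}. Arguments inf_ex {T join meet}. Arguments joinS_eq {T join meet}. Arguments meetS_eq {T join meet}.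

Theorem mainTheorem3 (T : Type) (join meet : T -> T -> option T)
  (HL : partial_lattice join meet) (a b c d : T) :
  (* (i) *)
  is_lattice_S join meet /\
  (* (ii) *)
  (join a b = Some c <-> joinS join meet (Elt a) (Elt b) = Elt c) /\
  (meet a b = Some d <-> meetS join meet (Elt a) (Elt b) = Elt d) /\
  (* (iii) *)
  ((exists u, Ub join a b u) ->
     exists e, join a b = Some e /\ joinS join meet (Elt a) (Elt b) = Elt e) /\
  (~ (exists u, Ub join a b u) -> joinS join meet (Elt a) (Elt b) = Top) /\
  ((exists l, Lb join a b l) ->
     exists e, meet a b = Some e /\ meetS join meet (Elt a) (Elt b) = Elt e) /\
  (~ (exists l, Lb join a b l) -> meetS join meet (Elt a) (Elt b) = Bot).
Proof.
  split; [|split; [|split; [|split; [|split; [|split]]]]].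
  - repeat split.
    + intros; apply (le_refl HL).
    + intros; eapply (le_antisym HL); eauto.
    + intros; eapply (le_trans HL); eauto.
    + intros; apply (sup_ex HL); auto.
    + intros; apply (inf_ex HL); auto.
  - split; intro H.
    + apply joinS_eq; auto. apply sup_elt; auto.
    + destruct (join a b) eqn:E.
      * rewrite (joinS_eq HL _ _ _ (sup_elt HL _ _ _ E)) in H. congruence.
      * rewrite (joinS_eq HL _ _ _ (sup_top HL _ _ E)) in H. congruence.
  - split; intro H.
    + apply meetS_eq; auto. apply inf_elt; auto.
    + destruct (meet a b) eqn:E.
      * rewrite (meetS_eq HL _ _ _ (inf_elt HL _ _ _ E)) in H. congruence.
      * rewrite (meetS_eq HL _ _ _ (inf_bot HL _ _ E)) in H. congruence.
  - intros [u [H1 H2]]. destruct (g_def (pl_join_assoc HL) _ _ _ H1 H2) as [e He].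
    exists e. split; auto. apply joinS_eq; auto. apply sup_elt; auto.
  - intro H. destruct (join a b) eqn:E.
    + exfalso. apply H. exists t. split; unfold ple.
      * eapply g_ub_l; eauto; apply HL.
      * eapply g_ub_r; eauto; apply HL.
    + apply joinS_eq; auto. apply sup_top; auto.
  - intros [u [H1 H2]]. rewrite ple_meet in H1, H2 by exact HL.
    destruct (g_def (pl_meet_assoc HL) _ _ _ H1 H2) as [e He].
    exists e. split; auto. apply meetS_eq; auto. apply inf_elt; auto.
  - intro H. destruct (meet a b) eqn:E.
    + exfalso. apply H. exists t. split; rewrite ple_meet by exact HL.
      * eapply g_ub_l; eauto; apply HL.
      * eapply g_ub_r; eauto; apply HL.
    + apply meetS_eq; auto. apply inf_bot; auto.
Qed.
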